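(* Let $A\subseteq B$ be an extension of commutative rings which has a retraction, i.e. there is a ring morphism $f:B\to A$ with $f(a)=a$ for all $a\in A$. Then $\mathfrak{C}(A,B)=0$.
   Context: All rings are commutative with identity. For an extension of rings $A\subseteq B$ and $A$-submodules $L,L'$ of $B$, $LL'$ is the $A$-submodule of finite sums $\sum x_ky_k$ with $x_k\in L,y_k\in L'$. An $A$-submodule $L$ of $B$ is an invertible ideal of $A\subseteq B$ if $LL'=A$ for some $A$-submodule $L'$ of $B$; these form an abelian group $\mathscr{G}(A,B)$ under multiplication, and $\mathfrak{C}(A,B)=\mathscr{G}(A,B)/\{Ax: x\in B^\ast\}$. *)

(* Defs.v *)
From HB Require Import structures.
From mathcomp Require Import all_boot all_order all_algebra.
Set Implicit Arguments. Unset Strict Implicit. Unset Printing Implicit Defensive.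
Import GRing.Theory.
Local Open Scope ring_scope.

(* The ring A is represented as a subring S of the commutative ring B
   (so the extension A ⊆ B is S ⊆ B). Subsets of B are Prop-valued predicates. *)

Definition is_subring (B : comPzRingType) (S : B -> Prop) : Prop :=
  [/\ S 0, S 1, (forall x y, S x -> S y -> S (x - y))
    & (forall x y, S x -> S y -> S (x * y))].

Definition is_submod (B : comPzRingType) (S L : B -> Prop) : Prop :=
  [/\ L 0, (forall x y, L x -> L y -> L (x + y))
    & (forall a x, S a -> L x -> L (a * x))].

Definition prodmod (B : comPzRingType) (L L' : B -> Prop) (z : B) : Prop :=
  exists n (x y : 'I_n -> B),
    [/\ (forall k, L (x k)), (forall k, L' (y k)) & z = \sum_(k < n) x k * y k].

Definition invertible_ideal (B : comPzRingType) (S L : B -> Prop) : Prop :=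
  is_submod S L /\
  exists L' : B -> Prop, is_submod S L' /\ (forall z, prodmod L L' z <-> S z).

Definition is_unitB (B : comPzRingType) (x : B) : Prop := exists y, x * y = 1.

Definition principal (B : comPzRingType) (S : B -> Prop) (x z : B) : Prop :=
  exists a, S a /\ z = a * x.

(* C(A,B) = 0 : every invertible ideal equals Ax for some unit x of B *)
Definition class_group_trivial (B : comPzRingType) (S : B -> Prop) : Prop :=
  forall L : B -> Prop, invertible_ideal S L ->
    exists x : B, is_unitB x /\ (forall z, L z <-> principal S x z).

(* Main.v *)
Require Import Defs.
From HB Require Import structures.
From mathcomp Require Import all_boot all_order all_algebra.
Local Open Scope ring_scope.
Import GRing.Theory.

Lemma submod_sum (B : comPzRingType) (S L : B -> Prop) n (g : 'I_n -> B) :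
  is_submod S L -> (forall k, L (g k)) -> L (\sum_(k < n) g k).
Proof.
case=> L0 LD _ Hg.
by apply: (big_ind L) => // i _; apply: Hg.
Qed.

Theorem theorem5p10 (B : comPzRingType) (S : B -> Prop) :
  is_subring S ->
  (exists f : {rmorphism B -> B},
      (forall b, S (f b)) /\ (forall a, S a -> f a = a)) ->
  class_group_trivial S.
Proof.
move=> [S0 S1 SB SM] [f [fS fid]] L [HL [L' [HL' HP]]].
have prodS : forall a b, L a -> L' b -> a * b = f a * f b.
  move=> a b La Lb; rewrite -rmorphM fid //; apply/HP.
  exists 1%N, (fun _ => a), (fun _ => b); split => //.
  by rewrite big_ord1.
have [n [x [y [Lx Ly E]]]] : prodmod L L' 1 by apply/HP.
have decomp : forall z, L z -> z = f z * \sum_(k < n) f (y k) * x k.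
  move=> z Lz.
  rewrite -{1}[z]mulr1 E !mulr_sumr; apply: eq_bigr => k _.
  by rewrite mulrCA (prodS _ _ Lz (Ly k)) mulrC -mulrA.
exists (\sum_(k < n) f (y k) * x k); split.
- exists (\sum_(j < n) f (x j) * y j).
  have Hk : forall k, x k * \sum_(j < n) f (x j) * y j = f (x k).
    move=> k; rewrite mulr_sumr.
    rewrite (eq_bigr (fun j => f (x k) * (f (x j) * f (y j)))); last first.
      by move=> j _; rewrite mulrCA (prodS _ _ (Lx k) (Ly j)) mulrCA.
    rewrite -mulr_sumr.
    have -> : \sum_(j < n) f (x j) * f (y j) = f 1.
      by rewrite E rmorph_sum; apply: eq_bigr => j _; rewrite rmorphM.
    by rewrite rmorph1 mulr1.
  rewrite mulr_suml.
  rewrite (eq_bigr (fun k => f (y k) * f (x k))); last first.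
    by move=> k _; rewrite -mulrA Hk.
  have -> : \sum_(k < n) f (y k) * f (x k) = f 1.
    by rewrite E rmorph_sum; apply: eq_bigr => j _; rewrite rmorphM mulrC.
  by rewrite rmorph1.
- move=> z; split.
  + move=> Lz; exists (f z); split => //; exact: decomp.
  + case=> a [Sa ->]; rewrite mulr_sumr.
    apply: (@submod_sum B S L n (fun k => a * (f (y k) * x k)) HL) => k.
    case: HL => _ _ HM.
    by rewrite mulrA; apply: HM => //; apply: SM.
Qed.
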